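(* Let $\mathbb{K}$ be a field of characteristic $p>0$, let $a_1,\dots,a_k\in\mathbb{K}$, and let $\alpha_1\le\dots\le\alpha_k$ and $\beta_1,\dots,\beta_k$ be nonnegative integers with $p>\max_j(\alpha_j+\beta_j)$. Let $P=\sum_{j=1}^k a_jX^{\alpha_j}(1+X)^{\beta_j}\in\mathbb{K}[X]$. If $P\neq0$, then \[\operatorname{val}(P)\le\max_{1\le j\le k}\left(\alpha_j+\binom{k+1-j}{2}\right).\]
   Context: For a nonzero polynomial $P$, $\operatorname{val}(P)$ is the largest integer $v$ such that $X^v$ divides $P$. *)

(* Defs.v *)
From HB Require Import structures.
From mathcomp Require Import all_boot all_order all_algebra.
Set Implicit Arguments. Unset Strict Implicit. Unset Printing Implicit Defensive.
Import GRing.Theory.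
Local Open Scope ring_scope.

(* val P = largest v such that 'X^v divides P (for P != 0).
   Since 'X^v %| P with P != 0 forces v < size P, the maximum over
   v < size P is the maximum over all v.  (val 0 = 0 is a junk value.) *)
Definition pval (K : fieldType) (P : {poly K}) : nat :=
  \max_(v < size P | ('X^v %| P)) (v : nat).

(* Main.v *)
Require Import Defs.
From HB Require Import structures.
From mathcomp Require Import all_boot all_order all_algebra.
From mathcomp Require perm.
From mathcomp Require Import ring zify.
From Stdlib Require Import Classical ClassicalEpsilon.
Set Implicit Arguments. Unset Strict Implicit. Unset Printing Implicit Defensive.
Import GRing.Theory.
Local Open Scope ring_scope.

Module Helpers.
Import perm.
Section S.
Variable K : fieldType.

Definition Yp : {poly K} := 'X * (1 + 'X).

Fixpoint Rs (w b : nat) (r : {poly K}) (i : nat) : {poly K} :=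
  match i with
  | 0 => r
  | i.+1 => ((w%:R *: (1 + 'X) + b%:R *: 'X - i%:R *: (1 + 'X *+ 2))
               * Rs w b r i + Yp * (Rs w b r i)^`())
  end.

Lemma derivYp : Yp^`() = 1 + 'X *+ 2.
Proof. rewrite /Yp derivM derivD derivX derivC add0r mulr2n; ring. Qed.

Lemma Yp_dexp i : Yp * (Yp ^+ i)^`() = i%:R *: (Yp^`() * Yp ^+ i).
Proof.
case: i => [|i]; first by rewrite expr0 derivC mulr0 scale0r.
rewrite deriv_exp /= scaler_nat -!mulrnAr exprS.
by rewrite -!mulrnAr mulrCA.
Qed.

Lemma dE w b : Yp * ('X^w * (1 + 'X) ^+ b)^`() =
   ('X^w * (1 + 'X) ^+ b) * (w%:R *: (1 + 'X) + b%:R *: 'X).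
Proof.
have h1 : 'X * ('X^w)^`() = w%:R *: 'X^w :> {poly K}.
  rewrite derivXn.
  by case: w => [|w]; rewrite ?mulr0n ?mulr0 ?scale0r //= mulrnAr -exprS scaler_nat.
have h2 : (1 + 'X) * ((1 + 'X) ^+ b)^`() = b%:R *: (1 + 'X) ^+ b :> {poly K}.
  case: b => [|b]; first by rewrite expr0 derivC mulr0 scale0r.
  by rewrite deriv_exp derivD derivC derivX add0r mul1r /= mulrnAr -exprS scaler_nat.
rewrite derivM.
transitivity ((1 + 'X) * (1 + 'X) ^+ b * ('X * ('X^w)^`()) + 'X * 'X^w * ((1 + 'X) * ((1 + 'X) ^+ b)^`()) : {poly K}).
  by rewrite /Yp; ring.
rewrite h1 h2 -!mul_polyC; ring.
Qed.

Lemma R1 w b r i : Yp ^+ i * ('X^w * (1 + 'X) ^+ b * r)^`(i) =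
   'X^w * (1 + 'X) ^+ b * Rs w b r i.
Proof.
set E := 'X^w * (1 + 'X) ^+ b.
have FE : Yp * E^`() = E * (w%:R *: (1 + 'X) + b%:R *: 'X) by exact: dE.
clearbody E.
elim: i => [|i IH]; first by rewrite expr0 derivn0 mul1r.
have D := congr1 (fun q => Yp * q^`()) IH; move: D => /=.
rewrite !derivM exprS.
set A := (Yp ^+ i)^`(); set B := (E * r)^`(i); set Z := Yp ^+ i.
set R := Rs w b r i; move=> D.
have FA : Yp * A = i%:R *: (Yp^`() * Z) by exact: Yp_dexp.
transitivity (Yp * (A * B + Z * B^`()) - (Yp * A) * B); first by ring.
rewrite D FA derivYp.
transitivity ((Yp * E^`()) * R + E * (Yp * R^`()) - i%:R%:P * (1 + 'X *+ 2) * (Z * B)).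
  by rewrite -!mul_polyC; ring.
rewrite FE IH /= -/R -!mul_polyC; ring.
Qed.

Lemma size_le_add (p q : {poly K}) n : (size p <= n)%N -> (size q <= n)%N -> (size (p + q)%R <= n)%N.
Proof. by move=> hp hq; apply: leq_trans (size_polyD _ _) _; rewrite geq_max hp hq. Qed.

Lemma size_lin2 (c d : K) : (size (c *: (1 + 'X) + d *: 'X : {poly K})%R <= 2)%N.
Proof.
apply: size_le_add; apply: leq_trans (size_scale_leq _ _) _; last by rewrite size_polyX.
by apply: size_le_add; rewrite ?size_poly1 ?size_polyX.
Qed.

Lemma size_YpR (R : {poly K}) : (size (Yp * R^`())%R <= (size R).+1)%N.
Proof.
have [->|nz] := eqVneq R 0; first by rewrite derivC mulr0 size_poly0.
apply: leq_trans (size_polyMleq _ _) _.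
have h3 : (size Yp <= 3)%N.
  apply: leq_trans (size_polyMleq _ _) _; rewrite size_polyX.
  have h1 : (size (1 + 'X : {poly K})%R <= 2)%N by apply: size_le_add; rewrite ?size_poly1 ?size_polyX.
  by move: h1; lia.
have := lt_size_deriv nz; lia.
Qed.

Lemma R2 w b r i : (size (Rs w b r i) <= size r + i)%N.
Proof.
elim: i => [|i IH] /=; first by rewrite addn0.
rewrite addnS; apply: size_le_add; last by apply: leq_trans (size_YpR _) _.
apply: leq_trans (size_polyMleq _ _) _.
have h2 : (size (w%:R *: (1 + 'X) + b%:R *: 'X - i%:R *: (1 + 'X *+ 2) : {poly K})%R <= 2)%N.
  have -> : w%:R *: (1 + 'X) + b%:R *: 'X - i%:R *: (1 + 'X *+ 2) =
       (w%:R - i%:R) *: (1 + 'X) + (b%:R - i%:R) *: 'X :> {poly K}.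
    by rewrite -!mul_polyC !rmorphB /=; ring.
  exact: size_lin2.
move: h2 IH; move: (size (Rs w b r i)) => B; move: (size _) => A hA hB; move: (size r) hB => s hB; lia.
Qed.

Lemma R3 w b r i : (Rs w b r i).[0] = r.[0] * \prod_(l < i) (w%:R - l%:R).
Proof.
elim: i => [|i IH] /=; first by rewrite big_ord0 mulr1.
have h1 : (1 : {poly K}).[0] = 1 by rewrite -polyC1 hornerC.
rewrite big_ord_recr /= hornerD !hornerM IH /Yp !(hornerD, hornerN, hornerZ, hornerX, hornerMn, hornerC, h1, hornerM); ring.
Qed.

Lemma size_det_trig m (Q : 'M[{poly K}]_m) :
  (forall i j, size (Q i j) <= i.+1)%N -> (size (\det Q) <= 'C(m, 2).+1)%N.
Proof.
move=> hQ; apply: leq_trans (size_sum _ _ _) _; apply/bigmax_leqP_seq => s _ _.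
apply: leq_trans (size_polyMleq _ _) _.
have h1 : (size ((-1) ^+ (perm.odd_perm s) : {poly K}) <= 1)%N.
  by have := size_poly_exp_leq (-1 : {poly K}) (perm.odd_perm s); rewrite size_polyN size_poly1 mul0n.
have h2 := size_poly_prod_leq (fun _ => true) (fun i => Q i (s i)).
have h3 : (\sum_(i < m) size (Q i (s i)) <= 'C(m, 2) + m)%N.
  apply: (@leq_trans (\sum_(i < m) ((i : nat) + 1))%N).
    by apply: leq_sum => i _; rewrite addn1; exact: hQ.
  by rewrite big_split /= sum1_card card_ord -bin2_sum big_mkord.
move: h2; rewrite cardT size_enum_ord => h2.
move: h1 h2 h3; move: (size _) => A; move: (size _) => B; move: (\sum_(i < m) _)%N => C.
lia.
Qed.

Definition ffp (i : nat) : {poly K} :=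
  \prod_(c <- [seq (l%:R : K) | l <- iota 0 i]) ('X - c%:P).

Lemma size_ffp i : size (ffp i) = i.+1.
Proof. by rewrite /ffp size_prod_XsubC size_map size_iota. Qed.

Lemma horner_ffp i y : (ffp i).[y] = \prod_(l < i) (y - l%:R).
Proof.
rewrite /ffp horner_prod big_map -(subn0 i) -/(index_iota 0 i) big_mkord subn0.
by apply: eq_bigr => l _; rewrite hornerXsubC.
Qed.

Lemma ff_det m (x : 'I_m -> K) : injective x ->
  \det (\matrix_(i < m, j < m) \prod_(l < i) (x j - l%:R)) != 0.
Proof.
move=> xinj.
pose C : 'M[K]_m := \matrix_(i, l) (ffp i)`_l.
pose V := Vandermonde m (\row_j x j).
have -> : \matrix_(i < m, j < m) \prod_(l < i) (x j - l%:R) = C *m V.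
  apply/matrixP => i j; rewrite !mxE -horner_ffp (@horner_coef_wide _ m); last by rewrite size_ffp.
  by apply: eq_bigr => l _; rewrite !mxE.
rewrite det_mulmx det_trig; last first.
  apply/is_trig_mxP => i j hij; rewrite mxE nth_default // size_ffp //.
rewrite det_Vandermonde mulf_neq0 //.
  apply/prodf_neq0 => i _; rewrite mxE.
  have := lead_coef_prod_XsubC [seq (l%:R : K) | l <- iota 0 i] predT id.
  rewrite /lead_coef -/(ffp i) size_ffp /= => ->; exact: oner_neq0.
apply/prodf_neq0 => i _; apply/prodf_neq0 => j hij; rewrite !mxE subr_eq0.
apply/eqP => /xinj eij; by rewrite eij ltnn in hij.
Qed.

Lemma natr_inj_lt p (hp : p \in [pchar K]) a b :
  (a < p)%N -> (b < p)%N -> (a%:R : K) = b%:R -> a = b.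
Proof.
wlog hab : a b / (a <= b)%N.
  by move=> H ha hb e; case: (leqP a b) => h; [exact: H | apply/esym/H => //; apply: ltnW].
move=> ha hb e.
have hd : (p %| b - a)%N by rewrite (dvdn_pcharf hp) natrB // e subrr.
have hlt : (b - a < p)%N by apply: leq_ltn_trans hb; apply: leq_subr.
case: (posnP (b - a)) => [/eqP|hpos].
  by rewrite subn_eq0 => hba; apply/eqP; rewrite eqn_leq hab hba.
by have := dvdn_leq hpos hd; rewrite leqNgt hlt.
Qed.

Lemma coprimeX1 n N : coprimep ('X^n : {poly K}) ((1 + 'X) ^+ N).
Proof.
apply: coprimep_expr; apply: coprimep_expl.
have -> : (1 + 'X : {poly K}) = 'X - (-1)%:P by rewrite polyCN opprK addrC.
by rewrite coprimep_XsubC rootE hornerX oppr_eq0 oner_eq0.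
Qed.

Lemma lemmaA p (hp : p \in [pchar K]) m (al be w : 'I_m -> nat)
  (u : 'I_m -> {poly K}) (M : 'M[K]_m) :
  (forall j, (u j).[0] != 0) -> injective w -> (forall j, (w j < p)%N) ->
  (forall j, 'X^(w j) * u j = \sum_i M i j *: ('X^(al i) * (1 + 'X) ^+ (be i))) ->
  (\sum_j w j <= \sum_i al i + 'C(m, 2))%N.
Proof.
move=> hu winj wp hg.
pose Dm (h : 'I_m -> {poly K}) := \matrix_(i < m, j < m) (Yp ^+ i * (h j)^`(i)).
pose f i := 'X^(al i) * (1 + 'X) ^+ (be i) : {poly K}.
pose g j := 'X^(w j) * u j.
pose Q := \matrix_(i < m, j < m) Rs (al j) (be j) 1 i.
pose G := \matrix_(i < m, j < m) Rs (w j) 0 (u j) i.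
have Eg : Dm g = Dm f *m map_mx polyC M.
  apply/matrixP => i j; rewrite !mxE /g hg raddf_sum mulr_sumr.
  apply: eq_bigr => l _; rewrite !mxE /= derivnZ -mul_polyC.
  by rewrite mulrCA mulrC.
have Ef : Dm f = Q *m diag_mx (\row_j f j).
  apply/matrixP => i j; rewrite mul_mx_diag !mxE.
  have := R1 (al j) (be j) 1 i; rewrite mulr1 => ->; exact: mulrC.
have EG : Dm g = G *m diag_mx (\row_j 'X^(w j)).
  apply/matrixP => i j; rewrite mul_mx_diag !mxE.
  have := R1 (w j) 0 (u j) i; rewrite expr0 mulr1 => ->; exact: mulrC.
have detG0 : (\det G).[0] != 0.
  rewrite -horner_evalE -det_map_mx.
  have -> : map_mx (horner_eval 0) G =
     (\matrix_(i < m, j < m) \prod_(l < i) ((w j)%:R - l%:R)) *m diag_mx (\row_j (u j).[0]).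
    apply/matrixP => i j; rewrite mul_mx_diag !mxE horner_evalE R3 mulrC.
    by rewrite ?mxE.
  rewrite det_mulmx det_diag mulf_neq0 //.
    apply: ff_det => a b /(natr_inj_lt hp (wp a) (wp b)); exact: winj.
  by apply/prodf_neq0 => j _; rewrite mxE.
have key : 'X^(\sum_j w j) * \det G =
   'X^(\sum_i al i) * ((\det Q * (\det M)%:P) * (1 + 'X) ^+ (\sum_i be i)).
  have := congr1 determinant Eg.
  rewrite EG Ef !det_mulmx !det_diag det_map_mx.
  have -> : \prod_i (\row_j 'X^(w j) : 'rV[{poly K}]_m) 0 i = 'X^(\sum_j w j).
    by rewrite -prodrXr; apply: eq_bigr => j _; rewrite mxE.
  have -> : \prod_i (\row_j f j : 'rV[{poly K}]_m) 0 i =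
      'X^(\sum_i al i) * (1 + 'X) ^+ (\sum_i be i).
    rewrite -prodrXr -prodrXr -big_split; apply: eq_bigr => j _; rewrite mxE.
    by [].
  move=> e; rewrite mulrC e /=; ring.
case: (leqP (\sum_j w j) (\sum_i al i + 'C(m, 2))) => // hlt.
exfalso.
have hge : (\sum_i al i <= \sum_j w j)%N by apply: leq_trans (leq_addr _ _) (ltnW hlt).
move: key; rewrite -(subnKC hge) exprD -mulrA => /mulfI.
move=> key0; have key := key0 (expf_neq0 _ (negbT (@polyX_eq0 K))); clear key0.
move: hlt; rewrite -(subnKC hge) ltn_add2l.
move: key; move: (\sum_j w j - \sum_i al i)%N => n key hn.
set T := \det Q * (\det M)%:P in key.
have hdv : 'X^n %| T * (1 + 'X) ^+ (\sum_i be i) by rewrite -key dvdp_mulIl.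
rewrite Gauss_dvdpl ?coprimeX1 // in hdv.
have T0 : T != 0.
  apply/eqP => T0; move: key; rewrite T0 mul0r => /eqP.
  rewrite mulf_eq0 expf_eq0 polyX_eq0 andbF /= => /eqP dG.
  by move: detG0; rewrite dG horner0 eqxx.
have := dvdp_leq T0 hdv; rewrite size_polyXn.
have hT : (size T <= 'C(m, 2).+1)%N.
  apply: leq_trans (size_polyMleq _ _) _.
  have := size_polyC_leq1 (\det M).
  have : (size (\det Q) <= 'C(m, 2).+1)%N.
    apply: size_det_trig => i j; rewrite mxE.
    by apply: leq_trans (R2 _ _ _ _) _; rewrite size_poly1.
  move: (size (\det Q)) (size (\det M)%:P) => A B; lia.
move: hT hn; move: (size T) => A; lia.
Qed.


Definition vl (h : {poly K}) : nat := find (fun c => c != 0) h.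

Lemma has_nz (h : {poly K}) : h != 0 -> has (fun c => c != 0) h.
Proof.
move=> h0; apply/hasP; exists (lead_coef h) => //; last by rewrite lead_coef_eq0.
by rewrite /lead_coef mem_nth // prednK // size_poly_gt0.
Qed.

Lemma vl_coef (h : {poly K}) : h != 0 -> h`_(vl h) != 0.
Proof. by move=> h0; apply: (nth_find 0 (has_nz h0)). Qed.

Lemma vl_lt_size (h : {poly K}) : h != 0 -> (vl h < size h)%N.
Proof. by move=> h0; rewrite /vl -has_find has_nz. Qed.

Lemma vl_below (h : {poly K}) i : (i < vl h)%N -> h`_i = 0.
Proof. by move=> hi; have := before_find 0 hi => /negbFE/eqP. Qed.

Lemma vl_ge (h : {poly K}) n : h != 0 -> (forall i, (i < n)%N -> h`_i = 0) -> (n <= vl h)%N.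
Proof.
move=> h0 hc; rewrite leqNgt; apply/negP => hlt.
by move: (vl_coef h0); rewrite hc // eqxx.
Qed.

Lemma vl_scale c (h : {poly K}) : c != 0 -> vl (c *: h) = vl h.
Proof.
move=> c0; have [->|h0] := eqVneq h 0; first by rewrite scaler0.
have ch0 : c *: h != 0 by rewrite scaler_eq0 negb_or c0 h0.
apply/eqP; rewrite eqn_leq; apply/andP; split.
  apply: vl_ge => // i hi; have := vl_below hi; rewrite coefZ => /eqP.
  by rewrite mulf_eq0 (negbTE c0) /= => /eqP.
by apply: vl_ge => // i hi; rewrite coefZ vl_below ?mulr0.
Qed.

Definition vlq (h : {poly K}) : {poly K} := \poly_(i < size h - vl h) h`_(i + vl h).

Lemma vlqE (h : {poly K}) : h = 'X^(vl h) * vlq h.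
Proof.
apply/polyP => i; rewrite coefXnM coef_poly.
case: ltnP => hi; first by rewrite vl_below.
case: ltnP => hs; first by rewrite subnK.
by rewrite nth_default //; move: hi hs; move: (vl h) (size h) => A B; lia.
Qed.

Lemma vlq0 (h : {poly K}) : h != 0 -> (vlq h).[0] != 0.
Proof.
move=> h0; rewrite horner_coef0 coef_poly subn_gt0 vl_lt_size // add0n.
exact: vl_coef.
Qed.

Lemma dvd_vl (h : {poly K}) n : h != 0 -> 'X^n %| h -> (n <= vl h)%N.
Proof.
move=> h0 /divpK hd; apply: vl_ge => // i hi.
by rewrite -hd coefMXn hi.
Qed.

Lemma ex_max_prop (Pr : nat -> Prop) b : (exists n, Pr n) ->
  (forall n, Pr n -> (n <= b)%N) -> exists n, Pr n /\ forall k, Pr k -> (k <= n)%N.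
Proof.
move=> [n0 h0] hb.
have : forall d n, (b - n <= d)%N -> Pr n -> exists n, Pr n /\ forall k, Pr k -> (k <= n)%N.
  elim=> [|d IH] n hd hn.
    exists n; split => // k hk; have := hb k hk; move: hd; lia.
  case: (classic (exists k, Pr k /\ (n < k)%N)) => [[k [hk hnk]]|hno].
    by apply: (IH k) => //; move: hd hnk; lia.
  exists n; split => // k hk; rewrite leqNgt; apply/negP => hlt; apply: hno; exists k; split.
    exact: hk.
  exact: hlt.
by move=> H; apply: (H (b - n0)%N n0).
Qed.

Section Core.
Variables (p : nat) (hp : p \in [pchar K]) (al be : nat -> nat).

Definition fb j : {poly K} := 'X^(al j) * (1 + 'X) ^+ (be j).

Lemma size_fb j : (size (fb j) <= al j + be j + 1)%N.
Proof.
apply: leq_trans (size_polyMleq _ _) _; rewrite size_polyXn.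
have h1 : (size (1 + 'X : {poly K})%R <= 2)%N by apply: size_le_add; rewrite ?size_poly1 ?size_polyX.
have h2 : (size ((1 + 'X : {poly K}) ^+ be j)%R <= (be j).+1)%N.
  apply: leq_trans (size_poly_exp_leq _ _) _; move: h1.
  by case: (size _) => [|[|[|]]] //= _; rewrite ?mul0n ?mul1n.
move: h2; move: (size ((1 + 'X : {poly K}) ^+ be j)%R) => A; lia.
Qed.

Lemma size_comb (S : seq nat) (P : pred nat) (c : nat -> K) :
  (forall j, j \in S -> (al j + be j < p)%N) ->
  (size (\sum_(j <- S | P j) c j *: fb j)%R <= p)%N.
Proof.
move=> hb; rewrite big_seq_cond; apply: (big_ind (fun q : {poly K} => size q <= p)%N).
- by rewrite size_poly0.
- by move=> x y hx hy; apply: size_le_add.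
move=> j /andP[jS _]; apply: leq_trans (size_scale_leq _ _) _.
by apply: leq_trans (size_fb j) _; rewrite addn1; apply: hb.
Qed.

Lemma coef_low (S : seq nat) (P : pred nat) (c : nat -> K) n :
  (forall l, l \in S -> P l -> (n <= al l)%N) ->
  forall i, (i < n)%N -> (\sum_(l <- S | P l) c l *: fb l)`_i = 0.
Proof.
move=> hl i hi; rewrite coef_sum big_seq_cond big1 // => l /andP[lS Pl].
by rewrite coefZ /fb coefXnM (leq_trans hi (hl l lS Pl)) mulr0.
Qed.

Lemma sum_idx (S : seq nat) (P : pred nat) l : uniq S -> l \in S -> P l ->
  \sum_(i <- S | P i) ((i == l)%:R : K) *: fb i = fb l.
Proof.
move=> uS lS Pl; rewrite big_mkcond (bigD1_seq l) //= Pl eqxx scale1r big1 ?addr0 //.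
by move=> i /negbTE ->; rewrite scale0r; case: ifP.
Qed.

Lemma sum_shift (S : seq nat) (P : pred nat) l (c : nat -> K) :
  (forall i, (l < i)%N -> P i) ->
  \sum_(i <- S | P i) (if (l < i)%N then c i else 0) *: fb i =
  \sum_(i <- S | (l < i)%N) c i *: fb i.
Proof.
move=> hP; rewrite big_mkcond [in RHS]big_mkcond; apply: eq_bigr => i _.
case: (ltnP l i) => hli; first by rewrite hP.
by rewrite scale0r; case: ifP.
Qed.

Definition Hc (S : seq nat) j (c : nat -> K) : {poly K} :=
  fb j + \sum_(l <- S | (j < l)%N) c l *: fb l.

Lemma caseB (S : seq nat) : uniq S ->
  (forall i j, i \in S -> j \in S -> (i <= j)%N -> (al i <= al j)%N) ->
  (forall j, j \in S -> (al j + be j < p)%N) ->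
  (forall j c, j \in S -> Hc S j c != 0) ->
  forall a : nat -> K, \sum_(j <- S) a j *: fb j != 0 ->
  exists2 j, j \in S & (vl (\sum_(j <- S) a j *: fb j) <=
                        al j + 'C(count (fun i => j <= i)%N S, 2))%N.
Proof.
move=> uS mono bnd Hnz a P0.
have sizeH : forall j c, j \in S -> (size (Hc S j c) <= p)%N.
  move=> j c jS; apply: size_le_add; last exact: size_comb.
  by apply: leq_trans (size_fb j) _; rewrite addn1; apply: bnd.
have hch : forall j, exists cj : nat -> K, j \in S ->
    forall c, (vl (Hc S j c) <= vl (Hc S j cj))%N.
  move=> j; case: (boolP (j \in S)) => jS; last by exists (fun _ => 0).
  have hex : exists n, exists c, vl (Hc S j c) = n.
    by exists (vl (Hc S j (fun _ => 0))); exists (fun _ => 0).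
  have hb : forall n, (exists c, vl (Hc S j c) = n) -> (n <= p)%N.
    move=> n [c <-]; apply: ltnW; apply: leq_trans (vl_lt_size (Hnz j c jS)) _.
    exact: sizeH.
  have [n [[cj hcj] hmx]] := ex_max_prop hex hb.
  by exists cj => _ c; rewrite hcj; apply: hmx; exists c.
pose C j := proj1_sig (constructive_indefinite_description _ (hch j)).
have hC : forall j, j \in S -> forall c, (vl (Hc S j c) <= vl (Hc S j (C j)))%N.
  by move=> j; exact: (proj2_sig (constructive_indefinite_description _ (hch j))).
pose U j := vl (Hc S j (C j)).
have U2 : forall j, j \in S -> (al j <= U j)%N.
  move=> j jS; apply: vl_ge; first exact: Hnz.
  move=> i hi; rewrite /Hc coefD.
  have -> : (\sum_(l <- S | (j < l)%N) C j l *: fb l)`_i = 0.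
    by apply: coef_low hi => l lS jl; apply: mono => //; apply: ltnW.
  rewrite addr0.
  by rewrite /fb coefXnM hi.
have U4 : forall j, j \in S -> (U j < p)%N.
  by move=> j jS; apply: leq_trans (vl_lt_size (Hnz _ _ jS)) (sizeH _ _ jS).
have U3 : forall j l, j \in S -> l \in S -> (j < l)%N -> U j != U l.
  move=> j l jS lS jl; apply/eqP => eU.
  pose hj := Hc S j (C j); pose hl := Hc S l (C l).
  pose n := U j.
  have hl0 : hl`_n != 0 by rewrite /n eU; apply: vl_coef; apply: Hnz.
  pose lam := hj`_n / hl`_n.
  pose c' := fun i => C j i - lam * ((i == l)%:R + (if (l < i)%N then C l i else 0)).
  have E : Hc S j c' = hj - lam *: hl.
    rewrite /Hc /hj /hl /Hc.
    have -> : \sum_(i <- S | (j < i)%N) c' i *: fb i =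
      \sum_(i <- S | (j < i)%N) C j i *: fb i - lam *: (\sum_(i <- S | (j < i)%N) ((i == l)%:R : K) *: fb i
        + \sum_(i <- S | (j < i)%N) (if (l < i)%N then C l i else 0) *: fb i).
      rewrite -big_split /= scaler_sumr -sumrB; apply: eq_bigr => i _.
      by rewrite /c' scalerBl -scalerA scalerDl.
    rewrite sum_idx // sum_shift; last by move=> i li; apply: ltn_trans jl li.
    by rewrite addrA.
  have : (n.+1 <= vl (Hc S j c'))%N.
    apply: vl_ge; first exact: Hnz.
    move=> i; rewrite ltnS leq_eqVlt => /orP[/eqP ->|hi].
      by rewrite E coefB coefZ /lam divfK // subrr.
    rewrite E coefB coefZ (@vl_below hj) //.
    by rewrite (@vl_below hl) ?mulr0 ?subrr // -/(U l) -eU.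
  by have := hC j jS c'; rewrite -/(U j) -/n; lia.
have hex : exists j, (j \in S) && (a j != 0).
  case: (classic (exists j, (j \in S) && (a j != 0))) => // hno.
  exfalso; move/eqP: P0; apply.
  rewrite big_seq big1 // => j jS; case: (eqVneq (a j) 0) => [->|aj]; first by rewrite scale0r.
  by exfalso; apply: hno; exists j; rewrite jS aj.
case: (ex_minnP hex) => j0 /andP[j0S aj0] hmin.
have hP : \sum_(j <- S) a j *: fb j = a j0 *: Hc S j0 (fun l => a l / a j0).
  rewrite /Hc scalerDr scaler_sumr (bigD1_seq j0) //=; congr (_ + _).
  rewrite big_mkcond [in RHS]big_mkcond; apply: eq_big_seq => l lS.
  case: (ltngtP j0 l) => h.
  - by rewrite /= scalerA mulrC divfK.
  - rewrite /=.
    case: (eqVneq (a l) 0) => [->|al0]; first by rewrite scale0r.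
    by have := hmin l; rewrite lS al0 => /(_ isT); rewrite leqNgt h.
  - by [].
have vlP : (vl (\sum_(j <- S) a j *: fb j) <= U j0)%N.
  by rewrite hP vl_scale //; apply: hC.
pose T := [seq i <- S | (j0 <= i)%N].
pose m := size T.
pose nt (t : 'I_m) := nth 0%N T t.
have ntT : forall t : 'I_m, nt t \in T by move=> t; apply: mem_nth.
have ntS : forall t : 'I_m, nt t \in S by move=> t; have := ntT t; rewrite mem_filter => /andP[].
have ntge : forall t : 'I_m, (j0 <= nt t)%N by move=> t; have := ntT t; rewrite mem_filter => /andP[].
have uT : uniq T by apply: filter_uniq.
have nt_inj : injective nt.
  by move=> t1 t2 /eqP; rewrite nth_uniq // => /eqP /val_inj.
pose MM : 'M[K]_m := \matrix_(t', t) ((nt t' == nt t)%:R +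
                            (if (nt t < nt t')%N then C (nt t) (nt t') else 0)).
have hA := @lemmaA p hp m (fun t => al (nt t)) (fun t => be (nt t)) (fun t => U (nt t))
   (fun t => vlq (Hc S (nt t) (C (nt t)))) MM.
have hsum : (\sum_t U (nt t) <= \sum_t al (nt t) + 'C(m, 2))%N.
  apply: hA.
  - by move=> t; apply: vlq0; apply: Hnz; apply: ntS.
  - move=> t1 t2 /= e; apply: nt_inj.
    case: (ltngtP (nt t1) (nt t2)) => // h.
      by move: (U3 _ _ (ntS t1) (ntS t2) h); rewrite e eqxx.
    by move: (U3 _ _ (ntS t2) (ntS t1) h); rewrite e eqxx.
  - by move=> t; apply: U4; apply: ntS.
  move=> t; rewrite /U -vlqE.
  transitivity (\sum_(l <- T) (((l == nt t)%:R : K) +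
       (if (nt t < l)%N then C (nt t) l else 0)) *: fb l); last first.
    rewrite (big_nth 0%N) big_mkord; apply: eq_bigr => i _; rewrite mxE.
    by [].
  rewrite big_filter.
  under eq_bigr do rewrite scalerDl.
  rewrite big_split /= sum_idx //.
  by rewrite sum_shift // => i hi; apply: leq_trans (ntge t) (ltnW hi).
have j0T : j0 \in T by rewrite mem_filter leqnn.
have ht0 : (index j0 T < m)%N by rewrite index_mem.
pose t0 : 'I_m := Ordinal ht0.
have nt0 : nt t0 = j0 by rewrite /nt /= nth_index.
have hsplit : (\sum_t U (nt t) = \sum_t al (nt t) + \sum_t (U (nt t) - al (nt t)))%N.
  by rewrite -big_split; apply: eq_bigr => t _ /=; rewrite subnKC // U2 // ntS.
have hle : (U j0 - al j0 <= \sum_t (U (nt t) - al (nt t)))%N.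
  by rewrite (bigD1 t0) //= nt0 leq_addr.
exists j0 => //.
have hm : m = count (fun i => j0 <= i)%N S by rewrite /m size_filter.
rewrite -hm; have := U2 j0 j0S; move: vlP hsum hsplit hle.
move: (vl _) (U j0) (al j0) (\sum_t U (nt t))%N (\sum_t al (nt t))%N (\sum_t (U (nt t) - al (nt t)))%N ('C(m, 2)).
lia.
Qed.


Lemma core n : forall S : seq nat, (size S < n)%N -> uniq S ->
  (forall i j, i \in S -> j \in S -> (i <= j)%N -> (al i <= al j)%N) ->
  (forall j, j \in S -> (al j + be j < p)%N) ->
  forall a : nat -> K, \sum_(j <- S) a j *: fb j != 0 ->
  exists2 j, j \in S & (vl (\sum_(j <- S) a j *: fb j) <=
                        al j + 'C(count (fun i => j <= i)%N S, 2))%N.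
Proof.
elim: n => [//|n IH] S hS uS mono bnd a P0.
case: (classic (exists j, j \in S /\ exists c, Hc S j c = 0)) => [[j [jS [c Hc0]]] | hB];
  last first.
  apply: caseB => // j c jS; apply/eqP => h; apply: hB; exists j; split => //; by exists c.
pose S' := [seq i <- S | i != j].
pose a' l := if (j < l)%N then a l - a j * c l else a l.
have eP : \sum_(l <- S) a l *: fb l = \sum_(l <- S') a' l *: fb l.
  have fj : fb j = - \sum_(l <- S | (j < l)%N) c l *: fb l.
    by apply/eqP; rewrite -addr_eq0; apply/eqP; exact: Hc0.
  rewrite (bigD1_seq j) //= big_filter fj.
  have e1 : \sum_(l <- S | l != j) a' l *: fb l = \sum_(l <- S | l != j) a l *: fb l -
      \sum_(l <- S | l != j) (if (j < l)%N then a j * c l else 0) *: fb l.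
    rewrite -sumrB; apply: eq_bigr => l _; rewrite /a'.
    by case: ifP => _; rewrite ?scalerBl ?scale0r ?subr0.
  have e2 : \sum_(l <- S | l != j) (if (j < l)%N then a j * c l else 0) *: fb l =
      a j *: \sum_(l <- S | (j < l)%N) c l *: fb l.
    rewrite scaler_sumr big_mkcond [in RHS]big_mkcond; apply: eq_bigr => l _.
    case: (boolP (j < l)%N) => h; first by rewrite (gtn_eqF h) /= scalerA.
    by rewrite scale0r; case: ifP.
  by rewrite e1 e2 scalerN addrC.
have uS' : uniq S' by apply: filter_uniq.
have hS' : (size S' < n)%N.
  have eC : count (fun i => i != j) S = count (predC (pred1 j)) S by apply: eq_count.
  rewrite size_filter eC; have := count_predC (pred1 j) S.
  have : (0 < count (pred1 j) S)%N by rewrite -has_count has_pred1.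
  move: hS; move: (count (pred1 j) S) (count (predC (pred1 j)) S) (size S) => A B D.
  lia.
have memS : forall i, i \in S' -> i \in S by move=> i; rewrite mem_filter => /andP[].
have mono' : forall i k, i \in S' -> k \in S' -> (i <= k)%N -> (al i <= al k)%N.
  by move=> i k hi hk; apply: mono; apply: memS.
have bnd' : forall k, k \in S' -> (al k + be k < p)%N by move=> k hk; apply: bnd; apply: memS.
have P0' : \sum_(l <- S') a' l *: fb l != 0 by rewrite -eP.
have [l lS' hl] := IH S' hS' uS' mono' bnd' a' P0'.
exists l; first exact: memS.
rewrite eP; apply: leq_trans hl _; rewrite leq_add2l; apply: leq_bin2l.
by rewrite /S' count_filter; apply: sub_count => i /andP[].
Qed.


End Core.

End S.

Lemma count_iota_ge a n j : count (fun i => j <= i)%N (iota a n) = (n - (j - a))%N.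
Proof.
elim: n a => [|n IH] a /=; first by rewrite sub0n.
rewrite IH; case: (leqP j a) => h /=; lia.
Qed.

End Helpers.
Import Helpers.
Unset Implicit Arguments.

Theorem theorem5p2 (K : fieldType) (p : nat) (hp : p \in [pchar K])
  (k : nat) (a : nat -> K) (alpha beta : nat -> nat)
  (halpha : forall i j : nat, (1 <= i)%N -> (i <= j)%N -> (j <= k)%N ->
     (alpha i <= alpha j)%N)
  (hpbig : forall j : nat, (1 <= j)%N -> (j <= k)%N -> (alpha j + beta j < p)%N) :
  let P : {poly K} :=
    \sum_(1 <= j < k.+1) a j *: ('X^(alpha j) * (1 + 'X) ^+ (beta j)) in
  P != 0 ->
  (pval P <= \max_(1 <= j < k.+1) (alpha j + 'C(k.+1 - j, 2))%N)%N.
Proof.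
move=> P P0.
have eP : P = \sum_(j <- iota 1 k) a j *: fb K alpha beta j.
  by rewrite /P /index_iota subn1.
have mono : forall i j, i \in iota 1 k -> j \in iota 1 k -> (i <= j)%N ->
    (alpha i <= alpha j)%N.
  move=> i j; rewrite !mem_iota add1n !ltnS => /andP[hi1 _] /andP[_ hj2] hij.
  exact: halpha.
have bnd : forall j, j \in iota 1 k -> (alpha j + beta j < p)%N.
  move=> j; rewrite mem_iota add1n ltnS => /andP[hj1 hj2]; exact: hpbig.
have P0' : \sum_(j <- iota 1 k) a j *: fb K alpha beta j != 0 by rewrite -eP.
have [j jS hj] := core hp (ltnSn (size (iota 1 k))) (iota_uniq 1 k) mono bnd P0'.
rewrite -eP count_iota_ge in hj.
have hpv : (pval P <= vl P)%N.
  by rewrite /pval; apply/bigmax_leqP => v hv; apply: dvd_vl.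
apply: leq_trans hpv (leq_trans hj _).
have j1 : (1 <= j)%N by move: jS; rewrite mem_iota => /andP[].
have -> : (k - (j - 1) = k.+1 - j)%N by move: j1; lia.
have jI : j \in index_iota 1 k.+1 by rewrite /index_iota subn1.
exact: (@leq_bigmax_seq _ (index_iota 1 k.+1) xpredT (fun j => (alpha j + 'C(k.+1 - j, 2))%N) j jI isT).
Qed.
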